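(* Let $f:\mathbb{S}^3\to\mathbb{S}^3\subset\mathbb{H}$ be smooth and let $\Psi=[\tilde u,f]$ be the corresponding unit spinor on $\mathbb{S}^3$. For $a\in\mathrm{Im}\,\mathbb{H}$ let $\xi_a$ be defined by $\xi_a\cdot\Psi=\Psi a$ (explicitly, $\xi_a(g)=g\,f(g)\,a\,f(g)^{-1}$). Then the vector fields $\xi_a$ are divergence-free for all $a\in\mathrm{Im}\,\mathbb{H}$ if and only if for every $g\in\mathbb{S}^3$ the endomorphism $M_g$ of $\mathrm{Im}\,\mathbb{H}$ defined by $M_g(x):=f_*(gx)\,f(g)^{-1}$ is symmetric with respect to the standard Euclidean scalar product on $\mathrm{Im}\,\mathbb{H}\cong\mathbb{R}^3$.
   Context: $\mathbb{S}^3$ is the unit sphere in $\mathbb{H}$ with its round metric and Lie group structure; its Lie algebra is $\mathrm{Im}\,\mathbb{H}$ and $\mathrm{T}_g\mathbb{S}^3=g\,\mathrm{Im}\,\mathbb{H}$ (quaternion products). $u(g)=(gi,gj,gk)$ is the left-invariant orthonormal frame, defining the orientation, and $\tilde u$ is a lift of $u$ to the spin principal bundle. Every spinor is written $\Psi=[\tilde u,f]$ for a function $f:\mathbb{S}^3\to\mathbb{H}$ (spinor module $\mathbb{H}$); the Clifford product of a tangent vector $gx$ ($x\in\mathrm{Im}\,\mathbb{H}$) with $[\tilde u,f]$ is $[\tilde u,xf]$ (left quaternion multiplication) and the quaternionic structure is $[\tilde u,f]a=[\tilde u,fa]$. $f_*(gx)$ denotes the derivative of $f$ in the direction of the tangent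 vector $gx$, and $f_*(gx)f(g)^{-1}$ is a quaternion product. *)

(* Defs.v *)
From Stdlib Require Import Reals List.
Open Scope R_scope.

Record quat := mkQ { qr : R; qi : R; qj : R; qk : R }.

Definition qadd (p q : quat) : quat :=
  mkQ (qr p + qr q) (qi p + qi q) (qj p + qj q) (qk p + qk q).
Definition qscale (t : R) (q : quat) : quat :=
  mkQ (t * qr q) (t * qi q) (t * qj q) (t * qk q).
Definition qsub (p q : quat) : quat := qadd p (qscale (-1) q).
Definition qmul (p q : quat) : quat :=
  mkQ (qr p * qr q - qi p * qi q - qj p * qj q - qk p * qk q)
      (qr p * qi q + qi p * qr q + qj p * qk q - qk p * qj q)
      (qr p * qj q - qi p * qk q + qj p * qr q + qk p * qi q)
      (qr p * qk q + qi p * qj q - qj p * qi q + qk p * qr q).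
Definition qconj (q : quat) : quat := mkQ (qr q) (- qi q) (- qj q) (- qk q).
Definition qdot (p q : quat) : R :=
  qr p * qr q + qi p * qi q + qj p * qj q + qk p * qk q.
Definition qnorm2 (q : quat) : R := qdot q q.
Definition qinv (q : quat) : quat := qscale (/ qnorm2 q) (qconj q).

Definition qI : quat := mkQ 0 1 0 0.
Definition qJ : quat := mkQ 0 0 1 0.
Definition qK : quat := mkQ 0 0 0 1.

Definition isIm (q : quat) : Prop := qr q = 0.
Definition onS3 (q : quat) : Prop := qnorm2 q = 1.

Definition comp (n : nat) (q : quat) : R :=
  match n with 0 => qr q | 1 => qi q | 2 => qj q | _ => qk q end.
Definition basis (n : nat) : quat :=
  match n with 0 => mkQ 1 0 0 0 | 1 => qI | 2 => qJ | _ => qK end.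

Definition cont4 (u : quat -> R) : Prop :=
  forall p eps, 0 < eps -> exists del, 0 < del /\
    forall q, qnorm2 (qsub q p) < del * del -> Rabs (u q - u p) < eps.

(* C^infinity on R^4: all iterated partial derivatives exist and are continuous.
   D l is the iterated partial derivative along the index list l. *)
Definition smooth_R (u : quat -> R) : Prop :=
  exists D : list nat -> quat -> R,
    D nil = u /\
    (forall l, cont4 (D l)) /\
    (forall l i p, (i < 4)%nat ->
       derivable_pt_lim (fun t => D l (qadd p (qscale t (basis i)))) 0
                        (D (i :: l) p)).

Definition smoothH (F : quat -> quat) : Prop :=
  forall n, (n < 4)%nat -> smooth_R (fun p => comp n (F p)).

Definition dirD (G : quat -> quat) (p v w : quat) : Prop :=
  forall n, (n < 4)%nat ->
    derivable_pt_lim (fun t => comp n (G (qadd p (qscale t v)))) 0 (comp n w).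

Definition xi (F : quat -> quat) (a : quat) (p : quat) : quat :=
  qmul (qmul (qmul p (F p)) a) (qinv (F p)).

(* Divergence on S^3 (round metric) w.r.t. the orthonormal frame (gi,gj,gk):
   div X (g) = sum_e < nabla_{ge} X, ge >, and since ge is tangent the
   Levi-Civita derivative may be replaced by the ambient derivative. *)
Definition div_free_S3 (X : quat -> quat) : Prop :=
  forall g, onS3 g -> forall w1 w2 w3,
    dirD X g (qmul g qI) w1 -> dirD X g (qmul g qJ) w2 ->
    dirD X g (qmul g qK) w3 ->
    qdot w1 (qmul g qI) + qdot w2 (qmul g qJ) + qdot w3 (qmul g qK) = 0.

Definition Mg_symmetric (F : quat -> quat) : Prop :=
  forall g, onS3 g -> forall x y wx wy, isIm x -> isIm y ->
    dirD F g (qmul g x) wx -> dirD F g (qmul g y) wy ->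
    qdot (qmul wx (qinv (F g))) y = qdot x (qmul wy (qinv (F g))).

(* Main.v *)
Require Import Defs.
From Stdlib Require Import Reals List.
From Stdlib Require Import Lra Lia.
Open Scope R_scope.

Lemma dext f g x l : (forall t, f t = g t) -> derivable_pt_lim f x l -> derivable_pt_lim g x l.
Proof. intros E H eps He. destruct (H eps He) as [d Hd]. exists d. intros h H1 H2.
 rewrite <- !E. apply Hd; auto. Qed.
Lemma dval f x l l' : derivable_pt_lim f x l -> l = l' -> derivable_pt_lim f x l'.
Proof. intros H ->; exact H. Qed.
Lemma dplus f g x a b : derivable_pt_lim f x a -> derivable_pt_lim g x b ->
  derivable_pt_lim (fun t => f t + g t) x (a + b).
Proof. intros. exact (derivable_pt_lim_plus f g x a b H H0). Qed.
Lemma dminus f g x a b : derivable_pt_lim f x a -> derivable_pt_lim g x b ->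
  derivable_pt_lim (fun t => f t - g t) x (a - b).
Proof. intros. exact (derivable_pt_lim_minus f g x a b H H0). Qed.
Lemma dmul f g x a b : derivable_pt_lim f x a -> derivable_pt_lim g x b ->
  derivable_pt_lim (fun t => f t * g t) x (a * g x + f x * b).
Proof. intros. exact (derivable_pt_lim_mult f g x a b H H0). Qed.
Lemma dconst c x : derivable_pt_lim (fun _ => c) x 0.
Proof. exact (derivable_pt_lim_const c x). Qed.
Lemma did x : derivable_pt_lim (fun t => t) x 1.
Proof. exact (derivable_pt_lim_id x). Qed.
Lemma dinv f x a : derivable_pt_lim f x a -> f x <> 0 ->
  derivable_pt_lim (fun t => / f t) x (- a / (f x * f x)).
Proof. intros H Hn. eapply dext. 2:{ eapply dval.
 exact (derivable_pt_lim_div (fun _ => 1) f x 0 a (dconst 1 x) H Hn).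
 cbv beta; unfold Rsqr, Rdiv; ring. } intros t; cbv [div_fct]. unfold Rdiv. ring.
 Qed.

Lemma mvi (h h' : R -> R) c eps s :
  (forall x, derivable_pt_lim h x (h' x)) ->
  (forall x, Rabs x <= Rabs s -> Rabs (h' x - c) <= eps) ->
  Rabs (h s - h 0 - c*s) <= eps * Rabs s.
Proof.
  intros Hd Hb.
  set (k := fun x => h x - c * x).
  assert (Hk : forall x, derivable_pt_lim k x (h' x - c)).
  { intros x. unfold k. eapply dval. apply dminus. apply Hd. apply dmul. apply dconst. apply did.
    cbv beta; ring. }
  destruct (Rtotal_order s 0) as [Hs|[Hs|Hs]].
  - destruct (MVT_cor2 k (fun x => h' x - c) s 0 Hs (fun x _ => Hk x)) as [xi [E Hxi]].
    replace (h s - h 0 - c * s) with (-(k 0 - k s)) by (unfold k; ring).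
    rewrite E, Rabs_Ropp, Rabs_mult. replace (0 - s) with (- s) by ring. rewrite Rabs_Ropp. apply Rmult_le_compat_r. apply Rabs_pos.
    apply Hb. rewrite !Rabs_left; lra.
  - subst. rewrite Rabs_R0. replace (h 0 - h 0 - c*0) with 0 by ring. rewrite Rabs_R0. lra.
  - destruct (MVT_cor2 k (fun x => h' x - c) 0 s Hs (fun x _ => Hk x)) as [xi [E Hxi]].
    replace (h s - h 0 - c * s) with (k s - k 0) by (unfold k; ring).
    rewrite E, Rabs_mult. replace (s - 0) with s by ring. apply Rmult_le_compat_r. apply Rabs_pos.
    apply Hb. rewrite !Rabs_right; lra.
Qed.

Lemma dshift H s l : derivable_pt_lim (fun tau => H (s + tau)) 0 l -> derivable_pt_lim H s l.
Proof. intros Hd eps He. destruct (Hd eps He) as [d Hd']. exists d. intros h H1 H2.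
  specialize (Hd' h H1 H2). cbv beta in Hd'. rewrite Rplus_0_l, Rplus_0_r in Hd'. exact Hd'. Qed.

Lemma ab1 x y r : Rabs y <= r -> Rabs (x + y - x) <= r.
Proof. intros; replace (x+y-x) with y by ring; auto. Qed.
Lemma ab0 x r : 0 <= r -> Rabs (x - x) <= r.
Proof. intros; replace (x-x) with 0 by ring; rewrite Rabs_R0; auto. Qed.

Lemma sq_le a r : Rabs a <= r -> a * a <= r * r.
Proof. intros H. pose proof (Rabs_pos a). destruct (Rcase_abs a).
  rewrite Rabs_left in H by auto. nra. rewrite Rabs_right in H by auto. nra. Qed.

Lemma bound4 z p r : Rabs (qr z - qr p) <= r -> Rabs (qi z - qi p) <= r ->
  Rabs (qj z - qj p) <= r -> Rabs (qk z - qk p) <= r -> qnorm2 (qsub z p) <= 4 * (r * r).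
Proof. intros. apply sq_le in H, H0, H1, H2.
  destruct z, p; unfold qnorm2, qdot, qsub, qadd, qscale; simpl in *. nra. Qed.

Lemma abs4 a b c d : Rabs (a + b + c + d) <= Rabs a + Rabs b + Rabs c + Rabs d.
Proof. eapply Rle_trans. apply Rabs_triang. eapply Rle_trans.
  apply Rplus_le_compat_r. eapply Rle_trans. apply Rabs_triang.
  apply Rplus_le_compat_r. apply Rabs_triang. lra. Qed.

Lemma abs_tx t x K : Rabs x <= K -> Rabs (t * x) <= Rabs t * K.
Proof. intros; rewrite Rabs_mult. apply Rmult_le_compat_l; auto. apply Rabs_pos. Qed.


Lemma part_at (D : list nat -> quat -> R)
  (Hd : forall l i p, (i < 4)%nat ->
  derivable_pt_lim (fun t => D l (qadd p (qscale t (basis i)))) 0 (D (i :: l) p)) (z : R -> quat) (i : nat) s : (i < 4)%nat ->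
  (forall s tau, qadd (z s) (qscale tau (basis i)) = z (s + tau)) ->
  derivable_pt_lim (fun s => D nil (z s)) s (D (i :: nil) (z s)).
Proof. intros Hi Ez. apply dshift. eapply dext. 2: apply (Hd nil i (z s) Hi).
  intros tau; cbv beta. rewrite Ez. reflexivity. Qed.

Lemma C1_dir (D : list nat -> quat -> R) (Hc : forall l, cont4 (D l))
  (Hd : forall l i p, (i < 4)%nat ->
  derivable_pt_lim (fun t => D l (qadd p (qscale t (basis i)))) 0 (D (i :: l) p)) p v :
  derivable_pt_lim (fun t => D nil (qadd p (qscale t v))) 0
    (qr v * D (0%nat :: nil) p + qi v * D (1%nat :: nil) p
     + qj v * D (2%nat :: nil) p + qk v * D (3%nat :: nil) p).
Proof.
  destruct p as [pr pi pj pk]; destruct v as [vr vi vj vk]. simpl qr; simpl qi; simpl qj; simpl qk.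
  intros eps He.
  set (K := 1 + Rabs vr + Rabs vi + Rabs vj + Rabs vk).
  assert (HK : 0 < K) by (unfold K; pose proof (Rabs_pos vr); pose proof (Rabs_pos vi);
     pose proof (Rabs_pos vj); pose proof (Rabs_pos vk); lra).
  set (e' := eps / K).
  assert (He' : 0 < e') by (unfold e'; apply Rdiv_lt_0_compat; auto).
  set (p := mkQ pr pi pj pk).
  destruct (Hc (0%nat :: nil) p e' He') as [d0 [Hd0 C0]].
  destruct (Hc (1%nat :: nil) p e' He') as [d1 [Hd1 C1]].
  destruct (Hc (2%nat :: nil) p e' He') as [d2 [Hd2 C2]].
  destruct (Hc (3%nat :: nil) p e' He') as [d3 [Hd3 C3]].
  set (dl := Rmin (Rmin d0 d1) (Rmin d2 d3)).
  assert (Hdl : 0 < dl) by (unfold dl; repeat apply Rmin_pos; auto).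
  assert (dl0 : dl <= d0) by (unfold dl; eapply Rle_trans; apply Rmin_l).
  assert (dl1 : dl <= d1) by (unfold dl; eapply Rle_trans; [apply Rmin_l| apply Rmin_r]).
  assert (dl2 : dl <= d2) by (unfold dl; eapply Rle_trans; [apply Rmin_r| apply Rmin_l]).
  assert (dl3 : dl <= d3) by (unfold dl; eapply Rle_trans; apply Rmin_r).
  assert (Hpos : 0 < dl / (2 * K)) by (apply Rdiv_lt_0_compat; lra).
  exists (mkposreal _ Hpos). simpl. intros h Hh0 Hh.
  set (r := Rabs h * K).
  assert (Hr : 4 * (r * r) < dl * dl).
  { unfold r. assert (Rabs h * K < dl / 2).
    { apply (Rmult_lt_compat_r K) in Hh; auto. replace (dl / (2*K) * K) with (dl/2) in Hh by (field; lra). exact Hh. }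
    assert (0 <= Rabs h * K) by (pose proof (Rabs_pos h); nra).
    set (x := Rabs h * K) in *. nra. }
  assert (Hr0 : 0 <= r) by (unfold r; pose proof (Rabs_pos h); nra).
  assert (Kr : Rabs vr <= K) by (unfold K; pose proof (Rabs_pos vi); pose proof (Rabs_pos vj); pose proof (Rabs_pos vk); lra).
  assert (Ki : Rabs vi <= K) by (unfold K; pose proof (Rabs_pos vr); pose proof (Rabs_pos vj); pose proof (Rabs_pos vk); lra).
  assert (Kj : Rabs vj <= K) by (unfold K; pose proof (Rabs_pos vi); pose proof (Rabs_pos vr); pose proof (Rabs_pos vk); lra).
  assert (Kk : Rabs vk <= K) by (unfold K; pose proof (Rabs_pos vi); pose proof (Rabs_pos vj); pose proof (Rabs_pos vr); lra).
  pose proof (abs_tx h vr K Kr) as Tr. pose proof (abs_tx h vi K Ki) as Ti.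
  pose proof (abs_tx h vj K Kj) as Tj. pose proof (abs_tx h vk K Kk) as Tk.
  fold r in Tr, Ti, Tj, Tk.
  set (z0 := fun s => mkQ (pr + s) pi pj pk).
  set (z1 := fun s => mkQ (pr + h * vr) (pi + s) pj pk).
  set (z2 := fun s => mkQ (pr + h * vr) (pi + h * vi) (pj + s) pk).
  set (z3 := fun s => mkQ (pr + h * vr) (pi + h * vi) (pj + h * vj) (pk + s)).
  assert (B0 : Rabs (D nil (z0 (h * vr)) - D nil (z0 0) - D (0%nat :: nil) p * (h * vr)) <= e' * Rabs (h * vr)).
  { apply (mvi (fun s => D nil (z0 s)) (fun s => D (0%nat::nil) (z0 s))).
    - intros x. apply (part_at D Hd). lia. intros s tau. unfold z0, qadd, qscale, basis; simpl; f_equal; ring.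
    - intros x Hx. apply Rlt_le. apply C0. apply (Rle_lt_trans _ (4 * (r * r))). 2: eapply Rlt_le_trans; [exact Hr| apply Rmult_le_compat; lra].
      apply bound4.
      all: unfold z0, p; simpl; try (apply ab1; lra); apply ab0; lra. }
  assert (B1 : Rabs (D nil (z1 (h * vi)) - D nil (z1 0) - D (1%nat :: nil) p * (h * vi)) <= e' * Rabs (h * vi)).
  { apply (mvi (fun s => D nil (z1 s)) (fun s => D (1%nat::nil) (z1 s))).
    - intros x. apply (part_at D Hd). lia. intros s tau. unfold z1, qadd, qscale, basis, qI; simpl; f_equal; ring.
    - intros x Hx. apply Rlt_le. apply C1. apply (Rle_lt_trans _ (4 * (r * r))). 2: eapply Rlt_le_trans; [exact Hr| apply Rmult_le_compat; lra].
      apply bound4.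
      all: unfold z1, p; simpl; try (apply ab1; lra); apply ab0; lra. }
  assert (B2 : Rabs (D nil (z2 (h * vj)) - D nil (z2 0) - D (2%nat :: nil) p * (h * vj)) <= e' * Rabs (h * vj)).
  { apply (mvi (fun s => D nil (z2 s)) (fun s => D (2%nat::nil) (z2 s))).
    - intros x. apply (part_at D Hd). lia. intros s tau. unfold z2, qadd, qscale, basis, qJ; simpl; f_equal; ring.
    - intros x Hx. apply Rlt_le. apply C2. apply (Rle_lt_trans _ (4 * (r * r))). 2: eapply Rlt_le_trans; [exact Hr| apply Rmult_le_compat; lra].
      apply bound4.
      all: unfold z2, p; simpl; try (apply ab1; lra); apply ab0; lra. }
  assert (B3 : Rabs (D nil (z3 (h * vk)) - D nil (z3 0) - D (3%nat :: nil) p * (h * vk)) <= e' * Rabs (h * vk)).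
  { apply (mvi (fun s => D nil (z3 s)) (fun s => D (3%nat::nil) (z3 s))).
    - intros x. apply (part_at D Hd). lia. intros s tau. unfold z3, qadd, qscale, basis, qK; simpl; f_equal; ring.
    - intros x Hx. apply Rlt_le. apply C3. apply (Rle_lt_trans _ (4 * (r * r))). 2: eapply Rlt_le_trans; [exact Hr| apply Rmult_le_compat; lra].
      apply bound4.
      all: unfold z3, p; simpl; try (apply ab1; lra); apply ab0; lra. }
  replace (qadd p (qscale (0+h) (mkQ vr vi vj vk))) with (z3 (h*vk))
    by (unfold p, z3, qadd, qscale; simpl; f_equal; ring).
  replace (qadd p (qscale 0 (mkQ vr vi vj vk))) with (z0 0)
    by (unfold p, z0, qadd, qscale; simpl; f_equal; ring).
  replace (z0 (h*vr)) with (z1 0) in B0 by (unfold z0, z1; f_equal; ring).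
  replace (z1 (h*vi)) with (z2 0) in B1 by (unfold z2, z1; f_equal; ring).
  replace (z2 (h*vj)) with (z3 0) in B2 by (unfold z2, z3; f_equal; ring).
  fold p.
  set (a0 := D nil (z0 0)) in *. set (a1 := D nil (z1 0)) in *.
  set (a2 := D nil (z2 0)) in *. set (a3 := D nil (z3 0)) in *.
  set (a4 := D nil (z3 (h*vk))) in *.
  set (c0 := D (0%nat::nil) p) in *. set (c1 := D (1%nat::nil) p) in *.
  set (c2 := D (2%nat::nil) p) in *. set (c3 := D (3%nat::nil) p) in *.
  replace ((a4 - a0) / h - (vr * c0 + vi * c1 + vj * c2 + vk * c3))
    with (((a1 - a0 - c0 * (h*vr)) + (a2 - a1 - c1 * (h*vi)) + (a3 - a2 - c2*(h*vj))
       + (a4 - a3 - c3 * (h*vk))) / h) by (field; auto).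
  unfold Rdiv. rewrite Rabs_mult, Rabs_inv.
  pose proof (Rabs_pos_lt h Hh0) as Hhp.
  apply (Rmult_lt_reg_r (Rabs h)); auto. rewrite Rmult_assoc, Rinv_l by lra. rewrite Rmult_1_r.
  eapply Rle_lt_trans. apply abs4.
  rewrite !Rabs_mult in B0, B1, B2, B3.
  assert (e' * (Rabs h * Rabs vr) + e' * (Rabs h * Rabs vi) + e' * (Rabs h * Rabs vj) + e' * (Rabs h * Rabs vk) < eps * Rabs h).
  { replace eps with (e' * K) by (unfold e'; field; lra). unfold K.
    assert (0 < e' * Rabs h) by (apply Rmult_lt_0_compat; auto). nra. }
  lra.
Qed.


Lemma dopp f x a : derivable_pt_lim f x a -> derivable_pt_lim (fun t => - f t) x (- a).
Proof. intros H. eapply dext. 2: eapply dval. 2: apply (dminus (fun _ => 0) f x 0 a (dconst 0 x) H).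
  intros; cbv beta; ring. ring. Qed.

Definition qd (A : R -> quat) (A' : quat) : Prop :=
  derivable_pt_lim (fun t => qr (A t)) 0 (qr A') /\
  derivable_pt_lim (fun t => qi (A t)) 0 (qi A') /\
  derivable_pt_lim (fun t => qj (A t)) 0 (qj A') /\
  derivable_pt_lim (fun t => qk (A t)) 0 (qk A').

Lemma dirD_qd G p v w : dirD G p v w <-> qd (fun t => G (qadd p (qscale t v))) w.
Proof. split.
  - intros H. unfold qd. repeat split; [apply (H 0%nat)|apply (H 1%nat)|apply (H 2%nat)|apply (H 3%nat)]; lia.
  - intros [H0 [H1 [H2 H3]]] n Hn. destruct n as [|[|[|[|n]]]]; simpl; auto; lia. Qed.

Ltac dsolve := repeat (first [apply dminus | apply dplus | apply dmul | apply dopp | apply dconst | apply did | eassumption]).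

Lemma qd_mul A A' B B' : qd A A' -> qd B B' ->
  qd (fun t => qmul (A t) (B t)) (qadd (qmul A' (B 0)) (qmul (A 0) B')).
Proof. intros [a0 [a1 [a2 a3]]] [b0 [b1 [b2 b3]]]. unfold qd, qmul, qadd; simpl.
  repeat split; (eapply dval; [dsolve | cbv beta; ring]). Qed.

Lemma qd_const c : qd (fun _ => c) (mkQ 0 0 0 0).
Proof. unfold qd; simpl; repeat split; apply dconst. Qed.

Lemma qd_line p v : qd (fun t => qadd p (qscale t v)) v.
Proof. unfold qd, qadd, qscale; simpl. repeat split; (eapply dval; [dsolve | cbv beta; ring]). Qed.

Lemma qd_inv A A' : qd A A' -> qnorm2 (A 0) <> 0 ->
  qd (fun t => qinv (A t)) (qscale (-1) (qmul (qmul (qinv (A 0)) A') (qinv (A 0)))).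
Proof. intros [a0 [a1 [a2 a3]]] HN. unfold qnorm2, qdot in HN.
  unfold qd, qinv, qmul, qscale, qconj, qnorm2, qdot; simpl.
  repeat split; (eapply dval; [ repeat (first [apply dminus | apply dplus | apply dmul | apply dopp | apply dconst | apply did | eassumption | (apply dinv; [|exact HN])]) | cbv beta; field; exact HN]).
Qed.

Lemma qd_unique A a b : qd A a -> qd A b -> a = b.
Proof. intros [a0 [a1 [a2 a3]]] [b0 [b1 [b2 b3]]]. destruct a, b; simpl in *.
  f_equal; eapply uniqueness_limite; eauto. Qed.

Definition q0 := mkQ 0 0 0 0.
Definition qone := mkQ 1 0 0 0.
Definition xd g f a v W fi :=
  qadd (qmul (qadd (qmul (qadd (qmul v f) (qmul g W)) a) (qmul (qmul g f) q0)) fi)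
       (qmul (qmul (qmul g f) a) (qscale (-1) (qmul (qmul fi W) fi))).

Lemma qA p q r : qmul (qmul p q) r = qmul p (qmul q r).
Proof. destruct p, q, r; unfold qmul; simpl; f_equal; ring. Qed.
Lemma qDL p q r : qmul p (qadd q r) = qadd (qmul p q) (qmul p r).
Proof. destruct p, q, r; unfold qmul, qadd; simpl; f_equal; ring. Qed.
Lemma qDR p q r : qmul (qadd p q) r = qadd (qmul p r) (qmul q r).
Proof. destruct p, q, r; unfold qmul, qadd; simpl; f_equal; ring. Qed.
Lemma qSR c p q : qmul p (qscale c q) = qscale c (qmul p q).
Proof. destruct p, q; unfold qmul, qscale; simpl; f_equal; ring. Qed.
Lemma qM0 p : qmul p q0 = q0.
Proof. destruct p; unfold qmul, q0; simpl; f_equal; ring. Qed.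
Lemma qAD0 p : qadd p q0 = p.
Proof. destruct p; unfold qadd, q0; simpl; f_equal; ring. Qed.
Lemma q1l p : qmul qone p = p.
Proof. destruct p; unfold qmul, qone; simpl; f_equal; ring. Qed.
Lemma q1r p : qmul p qone = p.
Proof. destruct p; unfold qmul, qone; simpl; f_equal; ring. Qed.
Lemma dot_add X Y Z : qdot (qadd X Y) Z = qdot X Z + qdot Y Z.
Proof. destruct X, Y, Z; unfold qdot, qadd; simpl; ring. Qed.
Lemma dot_scale c X Z : qdot (qscale c X) Z = c * qdot X Z.
Proof. destruct X, Z; unfold qdot, qscale; simpl; ring. Qed.
Lemma dotg g X Y : qdot (qmul g X) (qmul g Y) = qnorm2 g * qdot X Y.
Proof. destruct g, X, Y; unfold qnorm2, qdot, qmul; simpl; ring. Qed.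
Lemma inv_l f : qnorm2 f <> 0 -> qmul (qinv f) f = qone.
Proof. destruct f; unfold qinv, qscale, qconj, qnorm2, qdot, qmul, qone in *; simpl in *; intros H.
  f_equal; field; auto. Qed.
Lemma inv_r f : qnorm2 f <> 0 -> qmul f (qinv f) = qone.
Proof. destruct f; unfold qinv, qscale, qconj, qnorm2, qdot, qmul, qone in *; simpl in *; intros H.
  f_equal; field; auto. Qed.
Lemma re_comm x y : qr (qmul x y) = qr (qmul y x).
Proof. destruct x, y; unfold qmul; simpl; ring. Qed.

Lemma div_e g f a e W fi : qnorm2 g = 1 -> qmul fi f = qone ->
  let b := qmul f (qmul a fi) in let m := qmul W fi in
  qdot (xd g f a (qmul g e) W fi) (qmul g e) =
  qdot (qmul e b) e + qdot (qmul m b) e - qdot (qmul b m) e.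
Proof. intros Hg Hf b m. unfold xd. rewrite qM0, qAD0, !qDR, !qA, !qSR.
  rewrite !dot_add, !dot_scale, !dotg, Hg. unfold b, m. rewrite !qA.
  rewrite <- (qA fi f (qmul a fi)), Hf, q1l. ring.
Qed.

Lemma compI b m : qdot (qmul qI b) qI + qdot (qmul m b) qI - qdot (qmul b m) qI = qr b + 2*(qj m*qk b - qk m*qj b).
Proof. destruct b, m; unfold qdot, qmul, qI; simpl; ring. Qed.
Lemma compJ b m : qdot (qmul qJ b) qJ + qdot (qmul m b) qJ - qdot (qmul b m) qJ = qr b + 2*(qk m*qi b - qi m*qk b).
Proof. destruct b, m; unfold qdot, qmul, qJ; simpl; ring. Qed.
Lemma compK b m : qdot (qmul qK b) qK + qdot (qmul m b) qK - qdot (qmul b m) qK = qr b + 2*(qi m*qj b - qj m*qi b).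
Proof. destruct b, m; unfold qdot, qmul, qK; simpl; ring. Qed.

Lemma re_b f a fi : qmul fi f = qone -> qr a = 0 -> qr (qmul f (qmul a fi)) = 0.
Proof. intros Hf Ha. rewrite re_comm, qA, Hf, q1r. exact Ha. Qed.

Lemma div_sum g f a fi W1 W2 W3 : qnorm2 g = 1 -> qmul fi f = qone -> qr a = 0 ->
  qdot (xd g f a (qmul g qI) W1 fi) (qmul g qI) + qdot (xd g f a (qmul g qJ) W2 fi) (qmul g qJ)
  + qdot (xd g f a (qmul g qK) W3 fi) (qmul g qK) =
  2*((qj (qmul W1 fi) * qk (qmul f (qmul a fi)) - qk (qmul W1 fi) * qj (qmul f (qmul a fi)))
   + (qk (qmul W2 fi) * qi (qmul f (qmul a fi)) - qi (qmul W2 fi) * qk (qmul f (qmul a fi)))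
   + (qi (qmul W3 fi) * qj (qmul f (qmul a fi)) - qj (qmul W3 fi) * qi (qmul f (qmul a fi)))).
Proof. intros Hg Hf Ha. rewrite !div_e by auto. rewrite compI, compJ, compK, re_b by auto. ring. Qed.

Definition lin (P0 P1 P2 P3 v : quat) : quat :=
  qadd (qadd (qadd (qscale (qr v) P0) (qscale (qi v) P1)) (qscale (qj v) P2)) (qscale (qk v) P3).
Definition comb (x W1 W2 W3 : quat) : quat :=
  qadd (qadd (qscale (qi x) W1) (qscale (qj x) W2)) (qscale (qk x) W3).

Lemma lin_add P0 P1 P2 P3 u v : lin P0 P1 P2 P3 (qadd u v) = qadd (lin P0 P1 P2 P3 u) (lin P0 P1 P2 P3 v).
Proof. destruct P0, P1, P2, P3, u, v; unfold lin, qadd, qscale; simpl; f_equal; ring. Qed.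
Lemma lin_scale P0 P1 P2 P3 c v : lin P0 P1 P2 P3 (qscale c v) = qscale c (lin P0 P1 P2 P3 v).
Proof. destruct P0, P1, P2, P3, v; unfold lin, qadd, qscale; simpl; f_equal; ring. Qed.
Lemma gx_comb g x : qr x = 0 -> qmul g x = comb x (qmul g qI) (qmul g qJ) (qmul g qK).
Proof. destruct x as [x0 x1 x2 x3]; simpl; intros ->. destruct g.
  unfold comb, qmul, qadd, qscale, qI, qJ, qK; simpl; f_equal; ring. Qed.
Lemma lin_comb P0 P1 P2 P3 g x : qr x = 0 ->
  lin P0 P1 P2 P3 (qmul g x) = comb x (lin P0 P1 P2 P3 (qmul g qI)) (lin P0 P1 P2 P3 (qmul g qJ)) (lin P0 P1 P2 P3 (qmul g qK)).
Proof. intros Hx. rewrite (gx_comb g x Hx). unfold comb at 1. rewrite !lin_add, !lin_scale. reflexivity. Qed.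

Lemma qSL c p q : qmul (qscale c p) q = qscale c (qmul p q).
Proof. destruct p, q; unfold qmul, qscale; simpl; f_equal; ring. Qed.

Lemma sym_final fi W1 W2 W3 x y : qr x = 0 -> qr y = 0 ->
  qj (qmul W1 fi) = qi (qmul W2 fi) -> qk (qmul W2 fi) = qj (qmul W3 fi) ->
  qi (qmul W3 fi) = qk (qmul W1 fi) ->
  qdot (qmul (comb x W1 W2 W3) fi) y = qdot x (qmul (comb y W1 W2 W3) fi).
Proof. intros Hx Hy S1 S2 S3. unfold comb. rewrite !qDR, !qSL.
  destruct (qmul W1 fi) as [a0 a1 a2 a3], (qmul W2 fi) as [b0 b1 b2 b3], (qmul W3 fi) as [c0 c1 c2 c3].
  simpl in S1, S2, S3. destruct x as [x0 x1 x2 x3], y as [y0 y1 y2 y3]; simpl in Hx, Hy; subst.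
  unfold qdot, qadd, qscale; simpl. ring. Qed.

Lemma dot_J X : qdot X qJ = qj X.
Proof. destruct X; unfold qdot, qJ; simpl; ring. Qed.
Lemma dot_K X : qdot X qK = qk X.
Proof. destruct X; unfold qdot, qK; simpl; ring. Qed.
Lemma dot_I X : qdot X qI = qi X.
Proof. destruct X; unfold qdot, qI; simpl; ring. Qed.
Lemma dotI_ X : qdot qI X = qi X.
Proof. destruct X; unfold qdot, qI; simpl; ring. Qed.
Lemma dotJ_ X : qdot qJ X = qj X.
Proof. destruct X; unfold qdot, qJ; simpl; ring. Qed.
Lemma dotK_ X : qdot qK X = qk X.
Proof. destruct X; unfold qdot, qK; simpl; ring. Qed.

Lemma smooth_comp (u : quat -> R) : smooth_R u -> exists d : nat -> quat -> R,
  forall p v, derivable_pt_lim (fun t => u (qadd p (qscale t v))) 0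
    (qr v * d 0%nat p + qi v * d 1%nat p + qj v * d 2%nat p + qk v * d 3%nat p).
Proof. intros [D [H0 [Hc Hd]]]. exists (fun i p => D (i :: nil) p). intros p v.
  subst u. apply (C1_dir D Hc Hd). Qed.

Lemma smoothH_lin F : smoothH F -> exists P0 P1 P2 P3 : quat -> quat,
  forall p v, dirD F p v (lin (P0 p) (P1 p) (P2 p) (P3 p) v).
Proof. intros hF.
  destruct (smooth_comp _ (hF 0%nat ltac:(lia))) as [d0 H0].
  destruct (smooth_comp _ (hF 1%nat ltac:(lia))) as [d1 H1].
  destruct (smooth_comp _ (hF 2%nat ltac:(lia))) as [d2 H2].
  destruct (smooth_comp _ (hF 3%nat ltac:(lia))) as [d3 H3].
  exists (fun p => mkQ (d0 0%nat p) (d1 0%nat p) (d2 0%nat p) (d3 0%nat p)).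
  exists (fun p => mkQ (d0 1%nat p) (d1 1%nat p) (d2 1%nat p) (d3 1%nat p)).
  exists (fun p => mkQ (d0 2%nat p) (d1 2%nat p) (d2 2%nat p) (d3 2%nat p)).
  exists (fun p => mkQ (d0 3%nat p) (d1 3%nat p) (d2 3%nat p) (d3 3%nat p)).
  intros p v n Hn. destruct n as [|[|[|[|n]]]]; [ | | | | lia]; simpl;
  (eapply dval; [ first [apply H0|apply H1|apply H2|apply H3] | unfold lin, qadd, qscale; simpl; ring]).
Qed.

Lemma qd_val A a b : qd A a -> a = b -> qd A b.
Proof. intros H ->; exact H. Qed.

Lemma xi_dir F a g v W : dirD F g v W -> qnorm2 (F g) <> 0 ->
  dirD (xi F a) g v (xd g (F g) a v W (qinv (F g))).
Proof. intros HW HN. apply dirD_qd in HW. apply dirD_qd. unfold xi.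
  assert (Hz : qadd g (qscale 0 v) = g) by (destruct g, v; unfold qadd, qscale; simpl; f_equal; ring).
  eapply qd_val. apply qd_mul. apply qd_mul. apply qd_mul. apply qd_line. exact HW. apply qd_const.
  apply qd_inv. exact HW. cbv beta. rewrite Hz. exact HN.
  cbv beta. rewrite Hz. reflexivity.
Qed.

Theorem lemma3p1 (F : quat -> quat)
  (hF : smoothH F) (hS : forall g, onS3 g -> onS3 (F g)) :
  (forall a, isIm a -> div_free_S3 (xi F a)) <-> Mg_symmetric F.
Proof.
  destruct (smoothH_lin F hF) as [P0 [P1 [P2 [P3 HP]]]].
  split.
  - intros H g Hg x y wx wy Hx Hy Hwx Hwy.
    pose proof (hS g Hg) as Nf. unfold onS3 in Nf, Hg.
    assert (Nf0 : qnorm2 (F g) <> 0) by lra.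
    set (f := F g) in *. set (fi := qinv f).
    assert (Hl : qmul fi f = qone) by (apply inv_l; auto).
    assert (Hr : qmul f fi = qone) by (apply inv_r; auto).
    set (L := lin (P0 g) (P1 g) (P2 g) (P3 g)).
    set (W1 := L (qmul g qI)). set (W2 := L (qmul g qJ)). set (W3 := L (qmul g qK)).
    assert (Hdiv : forall a, qr a = 0 -> 2*((qj (qmul W1 fi) * qk (qmul f (qmul a fi)) - qk (qmul W1 fi) * qj (qmul f (qmul a fi)))
   + (qk (qmul W2 fi) * qi (qmul f (qmul a fi)) - qi (qmul W2 fi) * qk (qmul f (qmul a fi)))
   + (qi (qmul W3 fi) * qj (qmul f (qmul a fi)) - qj (qmul W3 fi) * qi (qmul f (qmul a fi)))) = 0).
    { intros a Ha. rewrite <- (div_sum g f a fi W1 W2 W3) by auto.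
      apply (H a Ha g Hg); apply xi_dir; auto. }
    assert (Hb : forall e, qr e = 0 -> qr (qmul fi (qmul e f)) = 0 /\ qmul f (qmul (qmul fi (qmul e f)) fi) = e).
    { intros e He. split. rewrite re_comm, qA, Hr, q1r. exact He.
      rewrite !qA, Hr, q1r, <- qA, Hr, q1l. reflexivity. }
    destruct (Hb qI eq_refl) as [HaI HbI]. destruct (Hb qJ eq_refl) as [HaJ HbJ].
    destruct (Hb qK eq_refl) as [HaK HbK].
    pose proof (Hdiv _ HaI) as SI. rewrite HbI in SI. change (qi qI) with 1 in SI; change (qj qI) with 0 in SI; change (qk qI) with 0 in SI; cbn [qr] in SI.
    pose proof (Hdiv _ HaJ) as SJ. rewrite HbJ in SJ. change (qi qJ) with 0 in SJ; change (qj qJ) with 1 in SJ; change (qk qJ) with 0 in SJ; cbn [qr] in SJ.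
    pose proof (Hdiv _ HaK) as SK. rewrite HbK in SK. change (qi qK) with 0 in SK; change (qj qK) with 0 in SK; change (qk qK) with 1 in SK; cbn [qr] in SK.
    assert (Ex : wx = comb x W1 W2 W3).
    { unfold W1, W2, W3, L. rewrite <- (lin_comb _ _ _ _ g x Hx). apply dirD_qd in Hwx.
      eapply qd_unique. exact Hwx. apply dirD_qd. apply HP. }
    assert (Ey : wy = comb y W1 W2 W3).
    { unfold W1, W2, W3, L. rewrite <- (lin_comb _ _ _ _ g y Hy). apply dirD_qd in Hwy.
      eapply qd_unique. exact Hwy. apply dirD_qd. apply HP. }
    rewrite Ex, Ey. apply sym_final; auto; lra.
  - intros H a Ha g Hg w1 w2 w3 H1 H2 H3.
    pose proof (hS g Hg) as Nf. unfold onS3 in Nf, Hg.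
    assert (Nf0 : qnorm2 (F g) <> 0) by lra.
    set (L := lin (P0 g) (P1 g) (P2 g) (P3 g)).
    assert (E1 : w1 = xd g (F g) a (qmul g qI) (L (qmul g qI)) (qinv (F g))).
    { apply dirD_qd in H1. eapply qd_unique. exact H1. apply dirD_qd. apply xi_dir; [apply HP | auto]. }
    assert (E2 : w2 = xd g (F g) a (qmul g qJ) (L (qmul g qJ)) (qinv (F g))).
    { apply dirD_qd in H2. eapply qd_unique. exact H2. apply dirD_qd. apply xi_dir; [apply HP | auto]. }
    assert (E3 : w3 = xd g (F g) a (qmul g qK) (L (qmul g qK)) (qinv (F g))).
    { apply dirD_qd in H3. eapply qd_unique. exact H3. apply dirD_qd. apply xi_dir; [apply HP | auto]. }
    subst w1 w2 w3. rewrite div_sum; auto; [|apply inv_l; auto].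
    pose proof (H g Hg qI qJ _ _ eq_refl eq_refl (HP g (qmul g qI)) (HP g (qmul g qJ))) as S12.
    pose proof (H g Hg qJ qK _ _ eq_refl eq_refl (HP g (qmul g qJ)) (HP g (qmul g qK))) as S23.
    pose proof (H g Hg qK qI _ _ eq_refl eq_refl (HP g (qmul g qK)) (HP g (qmul g qI))) as S31.
    rewrite dot_J, dotI_ in S12. rewrite dot_K, dotJ_ in S23. rewrite dot_I, dotK_ in S31.
    fold L in S12, S23, S31.
    rewrite S12, S23, S31. ring.
Qed.
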